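(* Let $\{z_n\}_{n\ge 0}$ be a sequence of positive numbers satisfying the recurrence $$z_{n+1}=a_nz_{n}+b_nz_{n-1}\qquad (n\ge 1),$$ where $a_n>0$ and $b_n<0$. Assume that $a_{n+1}a_n+b_{n+1}>0$ for $n\geq 1$. For each $n$ let $$f_n(x)=\left[(a_{n+1}a_n+b_{n+1})x+a_{n+1}b_n\right](x-a_{n-1})x^6-b_{n-1}(a_nx+b_n)^4.$$ Suppose there exist two sequences $r(n)$ and $s(n)$ and a positive integer $N$ such that for all $n\geq N$: (i) $r(n)\leq\frac{z_{n}}{z_{n-1}}\leq s(n)\leq a_n$; (ii) $8(a_{n+1}a_n+b_{n+1})r(n)+5(a_{n+1}b_{n}-a_{n-1}a_{n+1}a_n-a_{n-1}b_{n+1})\geq0$ and $a_nr(n)+b_n\geq0$; (iii) $f_n''(r(n))>0$, $f_n'(r(n))>0$ and $f_n(s(n))<0$. Then the ratio sequence $\{z_{n+1}/z_n\}_{n\ge N}$ is ratio log-convex.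
   Context: A sequence $\{x_n\}$ of positive numbers is log-convex if $x_{n-1}x_{n+1}\ge x_n^2$ for all indices $n$ for which the three terms are defined. A sequence $\{x_n\}$ of positive numbers is called ratio log-convex if the sequence $\{x_{n+1}/x_n\}$ is log-convex. *)

(* Defs.v *)
From mathcomp Require Import all_boot all_order all_algebra.
Set Implicit Arguments. Unset Strict Implicit. Unset Printing Implicit Defensive.
Import Order.TTheory GRing.Theory Num.Theory.
Local Open Scope ring_scope.

Definition log_convex_from {R : realFieldType} (N : nat) (x : nat -> R) : Prop :=
  (forall n, (N <= n)%N -> 0 < x n) /\
  (forall n, (N < n)%N -> x n ^+ 2 <= x n.-1 * x n.+1).

Definition ratio_log_convex_from {R : realFieldType} (N : nat) (x : nat -> R) : Prop :=
  (forall n, (N <= n)%N -> 0 < x n) /\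
  log_convex_from N (fun n => x n.+1 / x n).

Definition fpoly {R : realFieldType} (a b : nat -> R) (n : nat) : {poly R} :=
  ((a n.+1 * a n + b n.+1) *: 'X + (a n.+1 * b n)%:P) * ('X - (a n.-1)%:P) * 'X^6
  - b n.-1 *: (a n *: 'X + (b n)%:P) ^+ 4.

(* Main.v *)
Require Import Defs.
From mathcomp Require Import all_boot all_order all_algebra.
From mathcomp Require Import ring lra.
Import Order.TTheory GRing.Theory Num.Theory.
Local Open Scope ring_scope.

Section Aux.
Variable R : realFieldType.

Definition Fe (A B c d a b x : R) :=
  A * x ^+ 8 + (B - A * c) * x ^+ 7 - B * c * x ^+ 6 - d * (a * x + b) ^+ 4.
Definition F1 (A B c d a b x : R) :=
  8%:R * A * x ^+ 7 + 7%:R * (B - A * c) * x ^+ 6 - 6%:R * B * c * x ^+ 5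
  - 4%:R * a * d * (a * x + b) ^+ 3.
Definition F2 (A B c d a b x : R) :=
  56%:R * A * x ^+ 6 + 42%:R * (B - A * c) * x ^+ 5 - 30%:R * B * c * x ^+ 4
  - 12%:R * a ^+ 2 * d * (a * x + b) ^+ 2.

Definition gp (A B c d a b : R) : {poly R} :=
  (A *: 'X + B%:P) * ('X - c%:P) * 'X^6 - d *: (a *: 'X + b%:P) ^+ 4.

Lemma gp0 A B c d a b x : (gp A B c d a b).[x] = Fe A B c d a b x.
Proof.
rewrite /gp /Fe ?(hornerD, hornerN, hornerM, hornerZ, hornerMn, horner_exp, hornerX, hornerC, hornerXn, hornerXsubC).
ring.
Qed.

Lemma gp1 A B c d a b x : ((gp A B c d a b)^`()).[x] = F1 A B c d a b x.
Proof.
rewrite /gp /F1 !(derivXn, deriv_exp, derivB, derivM, derivZ, derivD, derivC, derivX, derivXsubC, derivMn, derivMNn).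
rewrite ?(hornerD, hornerN, hornerM, hornerZ, hornerMn, horner_exp, hornerX, hornerC, hornerXn, hornerXsubC).
ring.
Qed.

Lemma gp2 A B c d a b x : ((gp A B c d a b)^`(2)).[x] = F2 A B c d a b x.
Proof.
rewrite /gp /F2 derivnS derivn1.
rewrite !(derivXn, deriv_exp, derivB, derivM, derivZ, derivD, derivC, derivX, derivXsubC, derivMn, derivMNn).
rewrite ?(hornerD, hornerN, hornerM, hornerZ, hornerMn, horner_exp, hornerX, hornerC, hornerXn, hornerXsubC).
ring.
Qed.

Lemma fpoly_h (a b : nat -> R) n x :
  (fpoly a b n).[x] = Fe (a n.+1 * a n + b n.+1) (a n.+1 * b n) (a n.-1) (b n.-1) (a n) (b n) x.
Proof. exact: gp0. Qed.

Lemma fpoly_d1 (a b : nat -> R) n x :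
  ((fpoly a b n)^`()).[x] = F1 (a n.+1 * a n + b n.+1) (a n.+1 * b n) (a n.-1) (b n.-1) (a n) (b n) x.
Proof. exact: gp1. Qed.

Lemma fpoly_d2 (a b : nat -> R) n x :
  ((fpoly a b n)^`(2)).[x] = F2 (a n.+1 * a n + b n.+1) (a n.+1 * b n) (a n.-1) (b n.-1) (a n) (b n) x.
Proof. exact: gp2. Qed.

Lemma powle k (t T : R) : 0 <= t -> t <= T -> 0 <= T ^+ k - t ^+ k.
Proof.
move=> ht htT; rewrite subr_ge0; apply: lerXn2r => //; rewrite ?nnegrE //.
exact: le_trans htT.
Qed.

Lemma mono (A B c d a b r x s : R) :
  0 < A -> B < 0 -> 0 < c -> d < 0 -> 0 < a -> b < 0 ->
  0 <= 8%:R * A * r + 5%:R * (B - A * c) -> 0 <= a * r + b ->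
  0 < F1 A B c d a b r -> 0 < F2 A B c d a b r -> r <= x -> x <= s ->
  Fe A B c d a b x <= Fe A B c d a b s.
Proof.
move=> hA hB hc hd ha hb h8 hu hF1 hF2 hrx hxs.
set E := B - A * c in h8 *. set Fp := - (B * c). set u := a * r + b in hu *.
have hE : E < 0 by have := mulr_gt0 hA hc; rewrite /E; lra.
have hFp : 0 < Fp by rewrite /Fp -mulNr; apply: mulr_gt0 => //; lra.
have har : 0 < a * r by move: hu; rewrite /u; lra.
have hr : 0 < r.
  by rewrite -(pmulr_rgt0 _ ha).
set t := x - r. set T := s - r.
have ht : 0 <= t by rewrite /t subr_ge0.
have htT : t <= T by rewrite /t /T; lra.
have -> : x = r + t by rewrite /t; ring.
have -> : s = r + T by rewrite /T; ring.
set c3 := 7%:R * r ^+ 4 * (8%:R * A * r + 5%:R * E) + 20%:R * Fp * r ^+ 3 + 4%:R * (- d) * u * a ^+ 3.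
set c4 := 35%:R * r ^+ 3 * (2%:R * A * r + E) + 15%:R * Fp * r ^+ 2 + (- d) * a ^+ 4.
set c5 := 7%:R * r ^+ 2 * (8%:R * A * r + 3%:R * E) + 6%:R * Fp * r.
set c6 := 7%:R * r * (4%:R * A * r + E) + Fp.
set c7 := 8%:R * A * r + E.
have -> : Fe A B c d a b (r + T) = Fe A B c d a b (r + t)
   + F1 A B c d a b r * (T - t) + F2 A B c d a b r / 2%:R * (T ^+ 2 - t ^+ 2)
   + c3 * (T ^+ 3 - t ^+ 3) + c4 * (T ^+ 4 - t ^+ 4) + c5 * (T ^+ 5 - t ^+ 5)
   + c6 * (T ^+ 6 - t ^+ 6) + c7 * (T ^+ 7 - t ^+ 7) + A * (T ^+ 8 - t ^+ 8).
  rewrite /Fe /F1 /F2 /c3 /c4 /c5 /c6 /c7 /E /Fp /u. by field.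
clearbody E Fp u t T.
have p1 := powle 1 _ _ ht htT. have p2 := powle 2 _ _ ht htT. have p3 := powle 3 _ _ ht htT.
have p4 := powle 4 _ _ ht htT. have p5 := powle 5 _ _ ht htT. have p6 := powle 6 _ _ ht htT.
have p7 := powle 7 _ _ ht htT. have p8 := powle 8 _ _ ht htT.
have hc7 : 0 <= c7 by rewrite /c7; lra.
have hc6 : 0 <= c6.
  rewrite /c6; apply: addr_ge0; last lra.
  apply: mulr_ge0; [apply: mulr_ge0; lra|lra].
have hc5 : 0 <= c5.
  rewrite /c5; apply: addr_ge0.
    apply: mulr_ge0; [apply: mulr_ge0; [lra|apply: exprn_ge0; lra]|lra].
  apply: mulr_ge0; [apply: mulr_ge0|]; lra.
have hc4 : 0 <= c4.
  rewrite /c4; apply: addr_ge0; [apply: addr_ge0|].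
  - apply: mulr_ge0; [apply: mulr_ge0; [lra|apply: exprn_ge0; lra]|lra].
  - apply: mulr_ge0; [apply: mulr_ge0|apply: exprn_ge0]; lra.
  - apply: mulr_ge0; [lra|apply: exprn_ge0; lra].
have hc3 : 0 <= c3.
  rewrite /c3; apply: addr_ge0; [apply: addr_ge0|].
  - apply: mulr_ge0; [apply: mulr_ge0; [lra|apply: exprn_ge0; lra]|lra].
  - apply: mulr_ge0; [apply: mulr_ge0|apply: exprn_ge0]; lra.
  - apply: mulr_ge0; [apply: mulr_ge0; [apply: mulr_ge0|]|apply: exprn_ge0]; lra.
have q1 := mulr_ge0 (ltW hF1) p1.
have q2 := mulr_ge0 (divr_ge0 (ltW hF2) (ler0n R 2)) p2.
have q3 := mulr_ge0 hc3 p3. have q4 := mulr_ge0 hc4 p4.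
have q5 := mulr_ge0 hc5 p5. have q6 := mulr_ge0 hc6 p6.
have q7 := mulr_ge0 hc7 p7. have q8 := mulr_ge0 (ltW hA) p8.
rewrite expr1 in q1 *.
lra.
Qed.

Lemma key (p q u v w A' B' c d a b : R) :
  0 < p -> 0 < q -> 0 < u -> 0 < v -> 0 < w -> d < 0 ->
  u = c * q + d * p -> v = a * u + b * q -> w = A' * v + B' * u ->
  Fe (A' * a + B') (A' * b) c d a b (u / q) <= 0 ->
  (v / u / (u / q)) ^+ 2 <= u / q / (q / p) * (w / v / (v / u)).
Proof.
move=> hp hq hu hv hw hd eu ev ew hF.
have q0 : q != 0 by rewrite gt_eqF.
have p0 : p != 0 by rewrite gt_eqF.
have u0 : u != 0 by rewrite gt_eqF.
have v0 : v != 0 by rewrite gt_eqF.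
set X := w * p * u ^+ 6 - v ^+ 4 * q ^+ 4.
have e : Fe (A' * a + B') (A' * b) c d a b (u / q) = d / q ^+ 8 * X.
  rewrite /Fe /X ew ev eu. by field.
have hdq : d / q ^+ 8 < 0 by rewrite pmulr_llt0 // invr_gt0 exprn_gt0.
have hX : 0 <= X.
  rewrite e in hF. rewrite leNgt; apply/negP => hX.
  have h1 : 0 < - (d / q ^+ 8) by rewrite oppr_gt0.
  have h2 : 0 < - X by rewrite oppr_gt0.
  have := mulr_gt0 h1 h2. rewrite mulrNN. lra.
rewrite -subr_ge0.
have -> : u / q / (q / p) * (w / v / (v / u)) - (v / u / (u / q)) ^+ 2
   = X / (u ^+ 4 * q ^+ 2 * v ^+ 2).
  rewrite /X. field. by rewrite v0 q0 u0 p0.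
apply: divr_ge0 => //. apply: mulr_ge0; [apply: mulr_ge0|]; apply: exprn_ge0; lra.
Qed.

End Aux.

Theorem theorem2p11 (R : realFieldType) (z a b r s : nat -> R) (N : nat)
  (hz : forall n, 0 < z n)
  (hrec : forall n, (1 <= n)%N -> z n.+1 = a n * z n + b n * z n.-1)
  (ha : forall n, (1 <= n)%N -> 0 < a n)
  (hb : forall n, (1 <= n)%N -> b n < 0)
  (hab : forall n, (1 <= n)%N -> 0 < a n.+1 * a n + b n.+1)
  (hN : (2 <= N)%N)
  (hi : forall n, (N <= n)%N ->
     r n <= z n / z n.-1 /\ z n / z n.-1 <= s n /\ s n <= a n)
  (hii : forall n, (N <= n)%N ->
     0 <= 8%:R * (a n.+1 * a n + b n.+1) * r n
          + 5%:R * (a n.+1 * b n - a n.-1 * a n.+1 * a n - a n.-1 * b n.+1)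
     /\ 0 <= a n * r n + b n)
  (hiii : forall n, (N <= n)%N ->
     0 < ((fpoly a b n)^`(2)).[r n] /\ 0 < ((fpoly a b n)^`()).[r n]
     /\ (fpoly a b n).[s n] < 0) :
  ratio_log_convex_from N (fun n => z n.+1 / z n).
Proof.
have hy : forall n, 0 < z n.+1 / z n by move=> n; apply: divr_gt0.
split; first by move=> n _; exact: hy.
split; first by move=> n _ /=; apply: divr_gt0.
case=> [//|k] /= hk.
have hkN : (N <= k)%N by [].
have hm : (N <= k.+2)%N by apply: (leq_trans hkN (leq_trans (leqnSn k) (leqnSn k.+1))).
have [hr [hs _]] := hi _ hm.
have [h8 hu] := hii _ hm.
have [hf2 [hf1 hfs]] := hiii _ hm.
rewrite /= in hr hs h8 hu.
have k1 : (1 <= k.+1)%N by [].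
have k2 : (1 <= k.+2)%N by [].
have k3 : (1 <= k.+3)%N by [].
apply: (@key R _ _ _ _ _ _ _ _ _ _ _ (hz k) (hz k.+1) (hz k.+2) (hz k.+3) (hz k.+4) (hb _ k1)
           (hrec _ k1) (hrec _ k2) (hrec _ k3)).
rewrite fpoly_h /= in hfs.
rewrite fpoly_d1 /= in hf1. rewrite fpoly_d2 /= in hf2.
have h8' : 0 <= 8%:R * (a k.+3 * a k.+2 + b k.+3) * r k.+2
     + 5%:R * (a k.+3 * b k.+2 - (a k.+3 * a k.+2 + b k.+3) * a k.+1).
  lra.
apply: le_trans (ltW hfs).
apply: (@mono R _ _ _ _ _ _ _ _ _ _ _ _ _ _ _ h8' hu hf1 hf2 hr hs).
- exact: hab.
- by rewrite pmulr_rlt0 ?ha ?hb.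
- exact: ha.
- exact: hb.
- exact: ha.
- exact: hb.
Qed.
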